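(* Let $L$ be an infinite set and let $Q$ be either the edgeless cube $Q_L$ or the edged cube $\bar Q_L$. A basic sequence on $Q$ is universally convergent if and only if it is twist-finite.
   Context: Let $L$ be an infinite set, $-L=\{-r:r\in L\}$ a disjoint copy of $L$, and $0$ a new element; $L^\dagger=-L\cup\{0\}\cup L$ with $-(-r)=r$, $-0=0$. Adjoin $\pm\infty$ with $-(+\infty)=-\infty$ and set $\bar L^\dagger=L^\dagger\cup\{\pm\infty\}$. Points of $U=(\bar L^\dagger)^3$ have coordinates $x,y,z$. The edgeless cube $Q_L$ is the set of points of $U$ with exactly one coordinate in $\{\pm\infty\}$ (cells). The edged cube $\bar Q_L$ is the set of cells $(p,i)$ with $p\in U$, $i\in\{x,y,z\}$, $p_i\in\{\pm\infty\}$ ($i$ marks the face). For $i\in\{x,y,z\}$, $\alpha\in\bar L^\dagger$, the quarter-turn twist $T_{i,\alpha}$ is the permutation of cells fixing every cell whose point $p$ has $p_i\ne\alpha$ and acting on the others by $T_{x,\alpha}(\alpha,y,z)=(\alpha,-z,y)$, $T_{y,\alpha}(x,\alpha,z)=(z,\alpha,-x)$, $T_{z,\alpha}(x,y,\alpha)=(-y,x,\alpha)$ (in $\bar Q_L$ the marked coordinate is carried along by the rotation). Basic twists are $T,T^2,T^3$ for quarter-turn twists $T$. A basic sequence is a sequence $\langle\sigma_\eta:\eta<\theta\rangle$ of basic twists of ordinal length $\theta$; it is twist-finite if each basic twist occurs in it only finitely many times. A labelling is a map $f$ from cells to $X\cup\{\mathrm{NaC}\}$ for a set $X\not\ni\mathrm{NaC}$;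 it is legal if it never takes value NaC. A twist $\sigma$ acts by $(\sigma f)(c)=f(\sigma^{-1}c)$. Applying $\langle\sigma_\eta:\eta<\theta\rangle$ to $f_0$ produces $f_{\eta+1}=\sigma_\eta f_\eta$, and for limit $\lambda\le\theta$, $f_\lambda(c)$ is the eventually constant value of $f_\eta(c)$ ($\eta<\lambda$) if it exists and NaC otherwise; $f_\theta$ is the terminal labelling. The sequence is universally convergent if, applied to the identity labelling (each cell labelled by itself), its terminal labelling is legal. *)

(* Defs.v *)
From Stdlib Require Import List Bool ClassicalEpsilon.
Set Implicit Arguments.

Inductive coord (L : Type) : Type :=
| CPos (r : L)
| CNeg (r : L)
| CZero
| CPInf
| CNInf.
Arguments CZero {L}. Arguments CPInf {L}. Arguments CNInf {L}.

Definition cneg {L} (a : coord L) : coord L :=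
  match a with
  | CPos r => CNeg r | CNeg r => CPos r | CZero => CZero
  | CPInf => CNInf | CNInf => CPInf
  end.

Definition is_inf {L} (a : coord L) : bool :=
  match a with CPInf | CNInf => true | _ => false end.

Lemma is_inf_neg L (a : coord L) : is_inf (cneg a) = is_inf a.
Proof. destruct a; reflexivity. Qed.

Record point (L : Type) := Pt { px : coord L; py : coord L; pz : coord L }.

Inductive axis := AX | AY | AZ.

Definition get {L} (p : point L) (i : axis) : coord L :=
  match i with AX => px p | AY => py p | AZ => pz p end.

Definition rot {L} (i : axis) (p : point L) : point L :=
  match i with
  | AX => Pt (px p) (cneg (pz p)) (py p)
  | AY => Pt (pz p) (py p) (cneg (px p))
  | AZ => Pt (cneg (py p)) (px p) (pz p)
  end.

Definition rotinv {L} (i : axis) (p : point L) : point L :=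
  match i with
  | AX => Pt (px p) (pz p) (cneg (py p))
  | AY => Pt (cneg (pz p)) (py p) (px p)
  | AZ => Pt (py p) (cneg (px p)) (pz p)
  end.

(* how the marked coordinate is carried along by the rotation about axis i
   (self-inverse) *)
Definition rotm (i m : axis) : axis :=
  match i, m with
  | AX, AY => AZ | AX, AZ => AY
  | AY, AX => AZ | AY, AZ => AX
  | AZ, AX => AY | AZ, AY => AX
  | _, _ => m
  end.

Definition decide (P : Prop) : {P} + {~ P} := excluded_middle_informative P.

Definition ex1 (a b c : bool) : bool :=
  (a && negb b && negb c) || (negb a && b && negb c) || (negb a && negb b && c).

Definition is_cell {L} (p : point L) : bool :=
  ex1 (is_inf (px p)) (is_inf (py p)) (is_inf (pz p)).

Definition ecell (L : Type) := { p : point L | is_cell p = true }.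

Definition qt_pt {L} (i : axis) (a : coord L) (p : point L) : point L :=
  if decide (get p i = a) then rot i p else p.
Definition qtinv_pt {L} (i : axis) (a : coord L) (p : point L) : point L :=
  if decide (get p i = a) then rotinv i p else p.

Lemma is_cell_qt L i (a : coord L) p : is_cell (qt_pt i a p) = is_cell p.
Proof.
  unfold qt_pt; destruct (decide _); [|reflexivity].
  destruct i, p as [x y z]; unfold is_cell; simpl; rewrite ?is_inf_neg;
  destruct (is_inf x), (is_inf y), (is_inf z); reflexivity.
Qed.

Lemma is_cell_qtinv L i (a : coord L) p : is_cell (qtinv_pt i a p) = is_cell p.
Proof.
  unfold qtinv_pt; destruct (decide _); [|reflexivity].
  destruct i, p as [x y z]; unfold is_cell; simpl; rewrite ?is_inf_neg;
  destruct (is_inf x), (is_inf y), (is_inf z); reflexivity.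
Qed.

Definition eqt {L} (i : axis) (a : coord L) (c : ecell L) : ecell L :=
  exist _ (qt_pt i a (proj1_sig c)) (eq_trans (is_cell_qt i a _) (proj2_sig c)).
Definition eqtinv {L} (i : axis) (a : coord L) (c : ecell L) : ecell L :=
  exist _ (qtinv_pt i a (proj1_sig c)) (eq_trans (is_cell_qtinv i a _) (proj2_sig c)).

Definition dcell (L : Type) :=
  { pm : point L * axis | is_inf (get (fst pm) (snd pm)) = true }.

Definition dqt_pt {L} (i : axis) (a : coord L) (pm : point L * axis) :=
  if decide (get (fst pm) i = a) then (rot i (fst pm), rotm i (snd pm)) else pm.
Definition dqtinv_pt {L} (i : axis) (a : coord L) (pm : point L * axis) :=
  if decide (get (fst pm) i = a) then (rotinv i (fst pm), rotm i (snd pm)) else pm.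

Lemma dcell_qt L i (a : coord L) pm :
  is_inf (get (fst (dqt_pt i a pm)) (snd (dqt_pt i a pm))) = is_inf (get (fst pm) (snd pm)).
Proof.
  unfold dqt_pt; destruct (decide _); [|reflexivity].
  destruct i, pm as [[x y z] m]; destruct m; simpl; rewrite ?is_inf_neg; reflexivity.
Qed.

Lemma dcell_qtinv L i (a : coord L) pm :
  is_inf (get (fst (dqtinv_pt i a pm)) (snd (dqtinv_pt i a pm))) = is_inf (get (fst pm) (snd pm)).
Proof.
  unfold dqtinv_pt; destruct (decide _); [|reflexivity].
  destruct i, pm as [[x y z] m]; destruct m; simpl; rewrite ?is_inf_neg; reflexivity.
Qed.

Definition dqt {L} (i : axis) (a : coord L) (c : dcell L) : dcell L :=
  exist _ (dqt_pt i a (proj1_sig c)) (eq_trans (dcell_qt i a _) (proj2_sig c)).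
Definition dqtinv {L} (i : axis) (a : coord L) (c : dcell L) : dcell L :=
  exist _ (dqtinv_pt i a (proj1_sig c)) (eq_trans (dcell_qtinv i a _) (proj2_sig c)).

Inductive pw := Pw1 | Pw2 | Pw3.
Definition pw_nat (k : pw) : nat := match k with Pw1 => 1 | Pw2 => 2 | Pw3 => 3 end.

Record basic (L : Type) := BT { bt_axis : axis; bt_alpha : coord L; bt_pow : pw }.

(* action on labellings (None = NaC):  (sigma f)(c) = f (sigma^{-1} c),
   where sigma^{-1} = (T^{-1})^k; tinv i a is T_{i,a}^{-1}. *)
Definition act {C L} (tinv : axis -> coord L -> C -> C) (b : basic L)
  (f : C -> option C) : C -> option C :=
  fun c => f (Nat.iter (pw_nat (bt_pow b)) (tinv (bt_axis b) (bt_alpha b)) c).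

(* ---------- ordinal-length sequences: indexed by a well-ordered type ---------- *)
Definition well_order {I : Type} (lt : I -> I -> Prop) : Prop :=
  well_founded lt /\
  (forall a b c, lt a b -> lt b c -> lt a c) /\
  (forall a b, lt a b \/ a = b \/ lt b a).

(* stages eta <= theta: Some a for a < theta, None for theta itself *)
Definition lt_ext {I} (lt : I -> I -> Prop) (x y : option I) : Prop :=
  match x, y with
  | Some a, Some b => lt a b
  | Some _, None => True
  | None, _ => False
  end.

Definition ev_const {C I} (lt : I -> I -> Prop) (g : option I -> C -> option C)
  (eta : option I) (c : C) (v : option C) : Prop :=
  exists a, lt_ext lt (Some a) eta /\
    forall z, lt_ext lt z eta -> (z = Some a \/ lt_ext lt (Some a) z) -> g z c = v.

Definition is_run {C L I} (tinv : axis -> coord L -> C -> C) (lt : I -> I -> Prop)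
  (sigma : I -> basic L) (g : option I -> C -> option C) : Prop :=
  forall eta : option I,
    (* eta = 0 *)
    ((forall xi, ~ lt_ext lt xi eta) -> forall c, g eta c = Some c) /\
    (* eta = a + 1 *)
    (forall a, lt_ext lt (Some a) eta ->
       (forall z, lt_ext lt z eta -> z = Some a \/ lt_ext lt z (Some a)) ->
       g eta = act tinv (sigma a) (g (Some a))) /\
    (* eta limit *)
    ((exists xi, lt_ext lt xi eta) ->
       (forall a, lt_ext lt (Some a) eta -> exists z, lt_ext lt (Some a) z /\ lt_ext lt z eta) ->
       forall c,
         (forall v, ev_const lt g eta c v -> g eta c = v) /\
         ((forall v, ~ ev_const lt g eta c v) -> g eta c = None)).

Definition universally_convergent {C L I} (tinv : axis -> coord L -> C -> C)
  (lt : I -> I -> Prop) (sigma : I -> basic L) : Prop :=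
  exists g, is_run tinv lt sigma g /\ forall c, g None c <> None.

Definition twist_finite {L I} (sigma : I -> basic L) : Prop :=
  forall b : basic L, exists s : list I, forall eta, sigma eta = b -> In eta s.

Definition infinite_type (L : Type) : Prop :=
  forall s : list L, exists r, ~ In r s.

(* Main.v *)
Require Import Defs.
From Stdlib Require Import List PeanoNat Bool Eqdep_dec Classical ClassicalEpsilon FunctionalExtensionality Lia.


Lemma acc_some {I} (lt : I -> I -> Prop) a : Acc lt a -> Acc (lt_ext lt) (Some a).
Proof.
  induction 1 as [a _ IH]. constructor. intros [y|] Hy; simpl in Hy; [|contradiction].
  apply IH; exact Hy.
Qed.

Lemma olt_wf {I} {lt : I -> I -> Prop} : well_order lt -> well_founded (lt_ext lt).
Proof.
  intros [Hwf _]. intros [a|]. apply acc_some, Hwf.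
  constructor. intros [y|] Hy; [apply acc_some, Hwf|contradiction].
Qed.

Lemma olt_trans {I} {lt : I -> I -> Prop} : well_order lt ->
  forall x y z, lt_ext lt x y -> lt_ext lt y z -> lt_ext lt x z.
Proof.
  intros [_ [Ht _]] [x|] [y|] [z|]; simpl; intros; try tauto; eauto.
Qed.

Lemma olt_tri {I} {lt : I -> I -> Prop} : well_order lt ->
  forall x y, lt_ext lt x y \/ x = y \/ lt_ext lt y x.
Proof.
  intros [_ [_ Htr]] [x|] [y|]; simpl; auto.
  destruct (Htr x y) as [H|[H|H]]; subst; auto.
Qed.

Lemma olt_irrefl {I} {lt : I -> I -> Prop} : well_order lt ->
  forall x, ~ lt_ext lt x x.
Proof.
  intros Hwo x. pose proof (olt_wf Hwo x) as Hacc. induction Hacc as [x _ IH].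
  intro H. exact (IH x H H).
Qed.

Lemma olt_asym {I} {lt : I -> I -> Prop} : well_order lt ->
  forall x y, lt_ext lt x y -> lt_ext lt y x -> False.
Proof.
  intros Hwo x y H1 H2. apply (olt_irrefl Hwo x). eapply olt_trans; eauto.
Qed.

Lemma olt_min {I} {lt : I -> I -> Prop} : well_order lt ->
  forall P : option I -> Prop, (exists x, P x) ->
  exists x, P x /\ forall y, lt_ext lt y x -> ~ P y.
Proof.
  intros Hwo P [x Hx]. apply NNPP. intro Hn.
  assert (forall y, ~ P y) as Hall.
  { intro y. induction (olt_wf Hwo y) as [y _ IH]. intro Hy. apply Hn. exists y. split; auto. }
  exact (Hall x Hx).
Qed.

Lemma olt_below {I} (lt : I -> I -> Prop) x y : lt_ext lt x y -> exists a, x = Some a.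
Proof. destruct x; simpl; [eauto|contradiction]. Qed.

Definition is_zero {I} (lt : I -> I -> Prop) (x : option I) := forall xi, ~ lt_ext lt xi x.
Definition is_succ {I} (lt : I -> I -> Prop) (x : option I) (a : I) :=
  lt_ext lt (Some a) x /\ forall z, lt_ext lt z x -> z = Some a \/ lt_ext lt z (Some a).
Definition is_lim {I} (lt : I -> I -> Prop) (x : option I) :=
  (exists xi, lt_ext lt xi x) /\
  (forall a, lt_ext lt (Some a) x -> exists z, lt_ext lt (Some a) z /\ lt_ext lt z x).

Lemma stage_cases {I} {lt : I -> I -> Prop} : well_order lt ->
  forall x, is_zero lt x \/ (exists a, is_succ lt x a) \/ is_lim lt x.
Proof.
  intros Hwo x. destruct (classic (is_zero lt x)) as [H|H]; [auto|].
  right. destruct (classic (exists a, is_succ lt x a)) as [H2|H2]; [auto|].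
  right. split.
  - apply NNPP. intro H3. apply H. intros xi Hxi. apply H3. eauto.
  - intros a Ha. apply NNPP. intro H3. apply H2. exists a. split; auto.
    intros z Hz. destruct (olt_tri Hwo z (Some a)) as [H4|[H4|H4]]; auto.
    exfalso. apply H3. eauto.
Qed.

Lemma succ_unique {I} {lt : I -> I -> Prop} : well_order lt ->
  forall x a b, is_succ lt x a -> is_succ lt x b -> a = b.
Proof.
  intros Hwo x a b [Ha1 Ha2] [Hb1 Hb2].
  destruct (Ha2 _ Hb1) as [H|H]; [congruence|].
  destruct (Hb2 _ Ha1) as [H'|H']; [congruence|].
  exfalso; eapply olt_asym; eauto.
Qed.

Lemma lim_not_succ {I} {lt : I -> I -> Prop} : well_order lt ->
  forall x a, is_lim lt x -> is_succ lt x a -> False.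
Proof.
  intros Hwo x a [_ HL] [Ha1 Ha2]. destruct (HL a Ha1) as [z [Hz1 Hz2]].
  destruct (Ha2 z Hz2) as [H|H]; subst.
  - eapply olt_irrefl; eauto.
  - eapply olt_asym; eauto.
Qed.

Lemma zero_not {I} (lt : I -> I -> Prop) x y : is_zero lt x -> lt_ext lt y x -> False.
Proof. intros H H'; exact (H y H'). Qed.

Lemma max2 {I} {lt : I -> I -> Prop} : well_order lt ->
  forall (u w x : option I), lt_ext lt u x -> lt_ext lt w x ->
  exists z, lt_ext lt z x /\ (z = u \/ lt_ext lt u z) /\ (z = w \/ lt_ext lt w z).
Proof.
  intros Hwo u w x Hu Hw. destruct (olt_tri Hwo u w) as [H|[H|H]].
  - exists w; auto.
  - subst; exists w; auto.
  - exists u; auto.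
Qed.

Definition tau {C L} (tinv : axis -> coord L -> C -> C) (b : basic L) : C -> C :=
  Nat.iter (pw_nat (bt_pow b)) (tinv (bt_axis b) (bt_alpha b)).

Lemma act_tau {C L} (tinv : axis -> coord L -> C -> C) b f c :
  act tinv b f c = f (tau tinv b c).
Proof. reflexivity. Qed.


Lemma run_zero {C L I} {tinv : axis -> coord L -> C -> C} {lt : I -> I -> Prop} {sigma g} :
  is_run tinv lt sigma g -> forall x, is_zero lt x -> forall c, g x c = Some c.
Proof. intros H x Hz c. destruct (H x) as [H0 _]. apply H0; exact Hz. Qed.

Lemma run_succ {C L I} {tinv : axis -> coord L -> C -> C} {lt : I -> I -> Prop} {sigma g} :
  is_run tinv lt sigma g -> forall x a, is_succ lt x a ->
  forall c, g x c = g (Some a) (tau tinv (sigma a) c).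
Proof. intros H x a [Hs1 Hs2] c. destruct (H x) as [_ [H1 _]]. rewrite (H1 a Hs1 Hs2). reflexivity. Qed.

Lemma run_lim {C L I} {tinv : axis -> coord L -> C -> C} {lt : I -> I -> Prop} {sigma g} :
  is_run tinv lt sigma g -> forall x, is_lim lt x -> forall c y, g x c = Some y ->
  exists a, lt_ext lt (Some a) x /\
    forall z, lt_ext lt z x -> (z = Some a \/ lt_ext lt (Some a) z) -> g z c = Some y.
Proof.
  intros H x [Hl1 Hl2] c y Hy. destruct (H x) as [_ [_ H2]].
  destruct (H2 Hl1 Hl2 c) as [H3 H4].
  destruct (classic (exists v, ev_const lt g x c v)) as [[v Hv]|Hn].
  - pose proof (H3 v Hv) as E. rewrite Hy in E. subst v. exact Hv.
  - rewrite H4 in Hy; [discriminate|]. intros v Hv; apply Hn; eauto.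
Qed.

Lemma run_lim2 {C L I} {tinv : axis -> coord L -> C -> C} {lt : I -> I -> Prop} {sigma g} :
  is_run tinv lt sigma g -> forall x, is_lim lt x -> forall c v, ev_const lt g x c v -> g x c = v.
Proof.
  intros H x [Hl1 Hl2] c v Hv. destruct (H x) as [_ [_ H2]].
  destruct (H2 Hl1 Hl2 c) as [H3 H4]. auto.
Qed.

Definition Step {C L I} (tinv : axis -> coord L -> C -> C) (lt : I -> I -> Prop)
  (sigma : I -> basic L) (x : option I) (h : option I -> C -> option C) : C -> option C :=
  match excluded_middle_informative (is_zero lt x) with
  | left _ => fun c => Some c
  | right _ =>
    match excluded_middle_informative (exists a, is_succ lt x a) with
    | left e => let a := proj1_sig (constructive_indefinite_description _ e) in
                act tinv (sigma a) (h (Some a))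
    | right _ => fun c =>
        match excluded_middle_informative (exists v, ev_const lt h x c v) with
        | left e => proj1_sig (constructive_indefinite_description _ e)
        | right _ => None
        end
    end
  end.

Definition restrict {C I} (lt : I -> I -> Prop) (g : option I -> C -> option C) (x : option I) :=
  fun z => match excluded_middle_informative (lt_ext lt z x) with
           | left _ => g z | right _ => fun _ => None end.

Lemma restrict_eq {C I} (lt : I -> I -> Prop) (g : option I -> C -> option C) x z :
  lt_ext lt z x -> restrict lt g x z = g z.
Proof. intro H. unfold restrict. destruct (excluded_middle_informative _); tauto. Qed.

Lemma ev_restrict {C I} (lt : I -> I -> Prop) (g : option I -> C -> option C) x c v :
  ev_const lt (restrict lt g x) x c v <-> ev_const lt g x c v.
Proof.
  split; intros [a [Ha1 Ha2]]; exists a; split; auto; intros z Hz1 Hz2.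
  - rewrite <- (restrict_eq lt g x z Hz1). auto.
  - rewrite (restrict_eq lt g x z Hz1). auto.
Qed.

Lemma ev_unique {C I} {lt : I -> I -> Prop} : well_order lt ->
  forall (h : option I -> C -> option C) x c v1 v2,
  ev_const lt h x c v1 -> ev_const lt h x c v2 -> v1 = v2.
Proof.
  intros Hwo h x c v1 v2 [a1 [H11 H12]] [a2 [H21 H22]].
  destruct (max2 Hwo _ _ _ H11 H21) as [z [Hz1 [Hz2 Hz3]]].
  rewrite <- (H12 z Hz1 Hz2). apply H22; auto.
Qed.

Lemma run_exists {C L I} (tinv : axis -> coord L -> C -> C) (lt : I -> I -> Prop) :
  well_order lt -> forall sigma, exists g, is_run tinv lt sigma g.
Proof.
  intros Hwo sigma.
  set (G := fun (x : option I) (f : forall y, lt_ext lt y x -> C -> option C) =>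
        Step tinv lt sigma x (fun z => match excluded_middle_informative (lt_ext lt z x) with
                                   | left p => f z p | right _ => fun _ => None end)).
  set (g := Fix (olt_wf Hwo) (fun _ => C -> option C) G).
  assert (Hg : forall x, g x = Step tinv lt sigma x (restrict lt g x)).
  { intro x. unfold g. rewrite Fix_eq. reflexivity.
    intros x0 f f' Hff. unfold G. f_equal. apply functional_extensionality. intro z.
    destruct (excluded_middle_informative _); auto. }
  exists g. intro eta. split; [|split].
  - intros Hz c. rewrite Hg. unfold Step.
    destruct (excluded_middle_informative (is_zero lt eta)); [reflexivity|contradiction].
  - intros a Ha1 Ha2. rewrite Hg. unfold Step.
    destruct (excluded_middle_informative (is_zero lt eta)) as [Hz|_].
    { exfalso; exact (Hz _ Ha1). }
    destruct (excluded_middle_informative (exists a, is_succ lt eta a)) as [e|Hn].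
    + destruct (constructive_indefinite_description _ e) as [a' Ha']. simpl.
      assert (a' = a) by (eapply succ_unique; eauto; split; auto). subst a'.
      rewrite (restrict_eq lt g eta (Some a) Ha1). reflexivity.
    + exfalso; apply Hn; exists a; split; auto.
  - intros Hl1 Hl2 c.
    assert (HL : is_lim lt eta) by (split; auto).
    rewrite Hg. unfold Step.
    destruct (excluded_middle_informative (is_zero lt eta)) as [Hz|_].
    { exfalso. destruct Hl1 as [xi Hxi]. exact (Hz _ Hxi). }
    destruct (excluded_middle_informative (exists a, is_succ lt eta a)) as [[a Ha]|_].
    { exfalso; eapply lim_not_succ; eauto. }
    destruct (excluded_middle_informative (exists v, ev_const lt (restrict lt g eta) eta c v)) as [e|Hn].
    + destruct (constructive_indefinite_description _ e) as [v' Hv']. simpl. split.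
      * intros v Hv. apply (ev_unique Hwo (restrict lt g eta) eta c); auto.
        apply ev_restrict; auto.
      * intros Hn. exfalso. apply (Hn v'). apply ev_restrict; auto.
    + split; auto. intros v Hv. exfalso. apply Hn. exists v. apply ev_restrict; auto.
Qed.

Lemma iter_inj {C} (f : C -> C) : (forall x y, f x = f y -> x = y) ->
  forall n x y, Nat.iter n f x = Nat.iter n f y -> x = y.
Proof. intros Hf n; induction n as [|n IH]; simpl; auto. Qed.

Lemma iter_in {C} (f : C -> C) (k : list C) : (forall d, In d k -> In (f d) k) ->
  forall n d, In d k -> In (Nat.iter n f d) k.
Proof. intros Hf n; induction n as [|n IH]; simpl; auto. Qed.

Lemma iter_fix {C} (f : C -> C) d : f d = d -> forall n, Nat.iter n f d = d.
Proof. intros Hf n; induction n as [|n IH]; simpl; auto. rewrite IH; auto. Qed.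

Lemma nodup_ex {C} (k : list C) : exists k', NoDup k' /\ forall x, In x k <-> In x k'.
Proof.
  induction k as [|a k [k' [H1 H2]]].
  - exists nil; split; [constructor|tauto].
  - destruct (classic (In a k')) as [Ha|Ha].
    + exists k'; split; auto. intro x; simpl; rewrite H2; split; [intros [->|]|]; auto.
    + exists (a :: k'); split; [constructor; auto|]. intro x; simpl; rewrite H2; tauto.
Qed.

Lemma tf_list {L I} (sigma : I -> basic L) : twist_finite sigma ->
  forall Bs : list (basic L), exists s, forall eta, In (sigma eta) Bs -> In eta s.
Proof.
  intros Htf Bs; induction Bs as [|b Bs [s Hs]].
  - exists nil; simpl; tauto.
  - destruct (Htf b) as [s1 Hs1]. exists (s1 ++ s). intros eta [He|He]; apply in_or_app; auto.
Qed.

Lemma max_below {I} {lt : I -> I -> Prop} : well_order lt -> forall (x : option I) (s : list I),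
  (forall r, In r s -> ~ lt_ext lt (Some r) x) \/
  exists m, In m s /\ lt_ext lt (Some m) x /\
     forall r, In r s -> lt_ext lt (Some r) x -> Some r = Some m \/ lt_ext lt (Some r) (Some m).
Proof.
  intros Hwo x s; induction s as [|a s IH].
  - left; simpl; tauto.
  - destruct (classic (lt_ext lt (Some a) x)) as [Ha|Ha].
    + destruct IH as [IH|[m [Hm1 [Hm2 Hm3]]]].
      * right; exists a; split; [left; auto|split; auto].
        intros r [<-|Hr] Hr2; [auto|]. exfalso; exact (IH r Hr Hr2).
      * destruct (olt_tri Hwo (Some a) (Some m)) as [H|[H|H]].
        -- right; exists m; split; [right; auto|split; auto].
           intros r [<-|Hr] Hr2; auto.
        -- right; exists m; split; [right; auto|split; auto].
           intros r [<-|Hr] Hr2; auto.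
        -- right; exists a; split; [left; auto|split; auto].
           intros r [<-|Hr] Hr2; auto. right.
           destruct (Hm3 r Hr Hr2) as [E|E]; [rewrite E; auto|eapply olt_trans; eauto].
    + destruct IH as [IH|[m [Hm1 [Hm2 Hm3]]]].
      * left. intros r [<-|Hr]; auto.
      * right; exists m; split; [right; auto|split; auto].
        intros r [<-|Hr] Hr2; [contradiction|auto].
Qed.


Definition relevant {C L} (coordfn : C -> axis -> coord L) (k : list C) : list (basic L) :=
  flat_map (fun d => flat_map (fun i => map (fun p => BT i (coordfn d i) p) (Pw1 :: Pw2 :: Pw3 :: nil))
                                (AX :: AY :: AZ :: nil)) k.

Lemma relevant_spec {C L} (tinv : axis -> coord L -> C -> C) (coordfn : C -> axis -> coord L) :
  (forall i a d, tinv i a d <> d -> a = coordfn d i) ->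
  forall k b, ~ In b (relevant coordfn k) -> forall d, In d k -> tau tinv b d = d.
Proof.
  intros Hfix k [i a p] Hb d Hd. unfold tau; simpl. apply iter_fix.
  apply NNPP; intro Hn. apply Hb. apply Hfix in Hn. subst a.
  unfold relevant. apply in_flat_map. exists d; split; auto.
  apply in_flat_map. exists i; split; [destruct i; simpl; auto|].
  apply in_map_iff. exists p; split; auto. destruct p; simpl; auto.
Qed.

Lemma tf_uc {C L I} (tinv : axis -> coord L -> C -> C) (coordfn : C -> axis -> coord L)
  (H_cls : forall c, exists k, In c k /\ forall d i a, In d k -> In (tinv i a d) k)
  (H_fix : forall i a d, tinv i a d <> d -> a = coordfn d i)
  (lt : I -> I -> Prop) (Hwo : well_order lt) (sigma : I -> basic L) :
  twist_finite sigma -> universally_convergent tinv lt sigma.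
Proof.
  intros Htf. destruct (run_exists tinv lt Hwo sigma) as [g Hg].
  exists g; split; auto. intro c.
  destruct (H_cls c) as [k [Hck Hkcl]].
  destruct (tf_list sigma Htf (relevant coordfn k)) as [s Hs].
  assert (Htk : forall b d, In d k -> In (tau tinv b d) k).
  { intros b d Hd. unfold tau. apply iter_in; auto. }
  assert (Inv : forall eta,
    (forall d, In d k -> g eta d <> None) /\
    (forall eta1, lt_ext lt eta1 eta ->
       (forall r, In r s -> (eta1 = Some r \/ lt_ext lt eta1 (Some r)) -> lt_ext lt (Some r) eta -> False) ->
       forall d, In d k -> g eta1 d = g eta d)).
  { intro eta. induction (olt_wf Hwo eta) as [eta _ IH].
    destruct (stage_cases Hwo eta) as [Hz|[[a Ha]|Hl]].
    - split.
      + intros d _. rewrite (run_zero Hg eta Hz). discriminate.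
      + intros eta1 H1. exfalso; exact (Hz _ H1).
    - destruct (IH (Some a) (proj1 Ha)) as [IH1 IH2]. split.
      + intros d Hd. rewrite (run_succ Hg eta a Ha). apply IH1. auto.
      + intros eta1 H1 Hno d Hd.
        assert (Hna : ~ In a s).
        { intro Hin. destruct (proj2 Ha eta1 H1) as [E|E]; apply (Hno a Hin); auto; apply (proj1 Ha). }
        assert (Hfx : tau tinv (sigma a) d = d).
        { apply (relevant_spec tinv coordfn H_fix k); auto. }
        rewrite (run_succ Hg eta a Ha), Hfx.
        destruct (proj2 Ha eta1 H1) as [E|E]; [subst; auto|].
        apply IH2; auto. intros r Hr Hr1 Hr2. apply (Hno r Hr Hr1). eapply (olt_trans Hwo); [exact Hr2|apply (proj1 Ha)].
    - assert (P2 : forall eta1, lt_ext lt eta1 eta ->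
       (forall r, In r s -> (eta1 = Some r \/ lt_ext lt eta1 (Some r)) -> lt_ext lt (Some r) eta -> False) ->
       forall d, In d k -> g eta1 d = g eta d).
      { intros eta1 H1 Hno d Hd. symmetry. apply (run_lim2 Hg eta Hl).
        destruct (olt_below lt _ _ H1) as [a1 ->]. exists a1. split; auto.
        intros z Hz1 [Hz2|Hz2]; [subst; auto|]. symmetry.
        apply (proj2 (IH z Hz1)); auto. intros r Hr Hr1 Hr2. apply (Hno r Hr Hr1). eapply (olt_trans Hwo); [exact Hr2|exact Hz1]. }
      split; auto.
      intros d Hd.
      destruct (max_below Hwo eta s) as [Hnone|[m [Hm1 [Hm2 Hm3]]]].
      + destruct Hl as [[xi Hxi] _]. rewrite <- (P2 xi Hxi); auto.
        * apply (proj1 (IH xi Hxi)); auto.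
        * intros r Hr _ Hr2. exact (Hnone r Hr Hr2).
      + destruct (proj2 Hl m Hm2) as [z [Hz1 Hz2]].
        rewrite <- (P2 z Hz2); auto.
        * apply (proj1 (IH z Hz2)); auto.
        * intros r Hr Hr1 Hr2. destruct (Hm3 r Hr Hr2) as [E|E].
          -- injection E as ->. destruct Hr1 as [E'|E']; [subst; eapply olt_irrefl; eauto|].
             eapply olt_asym; eauto.
          -- assert (lt_ext lt (Some r) z) by (eapply olt_trans; eauto).
             destruct Hr1 as [E'|E']; [subst; eapply olt_irrefl; eauto|]. eapply olt_asym; eauto. }
  apply (proj1 (Inv None)); auto.
Qed.

Lemma run_inj {C L I} {tinv : axis -> coord L -> C -> C} {lt : I -> I -> Prop} {sigma g} :
  well_order lt -> (forall i a x y, tinv i a x = tinv i a y -> x = y) ->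
  is_run tinv lt sigma g -> forall eta d1 d2 x, g eta d1 = Some x -> g eta d2 = Some x -> d1 = d2.
Proof.
  intros Hwo Hinj Hg eta. induction (olt_wf Hwo eta) as [eta _ IH].
  intros d1 d2 x H1 H2.
  destruct (stage_cases Hwo eta) as [Hz|[[a Ha]|Hl]].
  - rewrite (run_zero Hg eta Hz) in H1, H2. congruence.
  - rewrite (run_succ Hg eta a Ha) in H1, H2.
    unfold tau in H1, H2. eapply iter_inj; [apply Hinj|].
    eapply (IH (Some a) (proj1 Ha)); eauto.
  - destruct (run_lim Hg eta Hl d1 x H1) as [a1 [Ha1 Ha1']].
    destruct (run_lim Hg eta Hl d2 x H2) as [a2 [Ha2 Ha2']].
    destruct (max2 Hwo _ _ _ Ha1 Ha2) as [z [Hz1 [Hz2 Hz3]]].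
    eapply (IH z Hz1); eauto.
Qed.

Lemma run_mono {C L I} {tinv : axis -> coord L -> C -> C} {lt : I -> I -> Prop} {sigma g}
  (k : list C) :
  well_order lt -> (forall d i a, In d k -> In (tinv i a d) k) ->
  is_run tinv lt sigma g -> forall eta mu, (mu = eta \/ lt_ext lt mu eta) ->
  forall d x, In d k -> g eta d = Some x -> exists d', In d' k /\ g mu d' = Some x.
Proof.
  intros Hwo Hcl Hg eta. induction (olt_wf Hwo eta) as [eta _ IH].
  intros mu [->|Hmu] d x Hd Hx; [eauto|].
  destruct (stage_cases Hwo eta) as [Hz|[[a Ha]|Hl]].
  - exfalso; exact (Hz _ Hmu).
  - rewrite (run_succ Hg eta a Ha) in Hx.
    apply (IH (Some a) (proj1 Ha) mu) with (d := tau tinv (sigma a) d); auto.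
    + destruct (proj2 Ha mu Hmu); auto.
    + unfold tau. apply iter_in; auto.
  - destruct (run_lim Hg eta Hl d x Hx) as [a1 [Ha1 Ha1']].
    destruct (max2 Hwo _ _ _ Ha1 Hmu) as [z [Hz1 [Hz2 Hz3]]].
    apply (IH z Hz1 mu) with (d := d); auto.
    destruct Hz3; auto.
Qed.

Lemma uc_tf {C L I} (tinv : axis -> coord L -> C -> C)
  (H_inj : forall i a x y, tinv i a x = tinv i a y -> x = y)
  (H_cls : forall c, exists k, In c k /\ forall d i a, In d k -> In (tinv i a d) k)
  (H_move : forall b, exists c, tau tinv b c <> c)
  (lt : I -> I -> Prop) (Hwo : well_order lt) (sigma : I -> basic L) :
  universally_convergent tinv lt sigma -> twist_finite sigma.
Proof.
  intros [g [Hg Hleg]]. intro b. apply NNPP. intro Hnb.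
  set (Inf := fun (x : option I) => forall s : list I,
                exists e, sigma e = b /\ lt_ext lt (Some e) x /\ ~ In e s).
  assert (InfN : Inf None).
  { intro s. apply NNPP. intro Hn. apply Hnb. exists s. intros eta He.
    apply NNPP. intro Hn2. apply Hn. exists eta. simpl; auto. }
  destruct (olt_min Hwo Inf (ex_intro _ None InfN)) as [lam [Hlam Hmin]].
  assert (Hfin : forall a, lt_ext lt (Some a) lam -> exists s, forall e, sigma e = b ->
                   lt_ext lt (Some e) (Some a) -> In e s).
  { intros a Ha. pose proof (Hmin _ Ha) as Hn. apply NNPP. intro Hn2. apply Hn.
    intro s. apply NNPP. intro Hn3. apply Hn2. exists s. intros e He1 He2.
    apply NNPP. intro Hn4. apply Hn3. eauto. }
  assert (Hcof : forall a, lt_ext lt (Some a) lam -> exists e, sigma e = b /\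
                   lt_ext lt (Some a) (Some e) /\ lt_ext lt (Some e) lam).
  { intros a Ha. destruct (Hfin a Ha) as [s Hs]. destruct (Hlam (a :: s)) as [e [He1 [He2 He3]]].
    exists e; split; auto; split; auto.
    destruct (olt_tri Hwo (Some a) (Some e)) as [H|[H|H]]; auto;
      exfalso; apply He3; first [ (injection H as ->; left; reflexivity) | (right; auto) ]. }
  assert (Hl : is_lim lt lam).
  { split.
    - destruct (Hlam nil) as [e [_ [He _]]]. eauto.
    - intros a Ha. destruct (Hcof a Ha) as [e [_ [He1 He2]]]. eauto. }
  destruct (H_move b) as [c0 Hc0].
  destruct (H_cls c0) as [k0 [Hck0 Hcl0]].
  destruct (nodup_ex k0) as [k [Hnd Hkk]].
  assert (Hcl : forall d i a, In d k -> In (tinv i a d) k).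
  { intros d i a Hd. apply Hkk, Hcl0, Hkk; auto. }
  assert (Hck : In c0 k) by (apply Hkk; auto).
  assert (Hnac : g lam c0 = None).
  { destruct (g lam c0) as [x|] eqn:Ex; [|reflexivity]. exfalso.
    destruct (run_lim Hg lam Hl c0 x Ex) as [a [Ha1 Ha2]].
    destruct (Hcof a Ha1) as [e [He1 [He2 He3]]].
    destruct (Hl) as [_ Hl2]. destruct (Hl2 e He3) as [z1 [Hz1 Hz1']].
    destruct (olt_min Hwo (fun z => lt_ext lt (Some e) z) (ex_intro _ z1 Hz1)) as [z0 [Hz0 Hz0m]].
    assert (Hsucc : is_succ lt z0 e).
    { split; auto. intros z Hz. destruct (olt_tri Hwo z (Some e)) as [H|[H|H]]; auto.
      exfalso; exact (Hz0m z Hz H). }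
    assert (Hz0l : lt_ext lt z0 lam).
    { destruct (olt_tri Hwo z0 z1) as [H|[H|H]].
      - eapply olt_trans; eauto.
      - subst; auto.
      - exfalso; exact (Hz0m z1 H Hz1). }
    pose proof (run_succ Hg z0 e Hsucc c0) as Es. rewrite He1 in Es.
    rewrite (Ha2 z0 Hz0l) in Es.
    2:{ right. eapply olt_trans; eauto. }
    rewrite <- He1 in Es.
    assert (Ee : g (Some e) c0 = Some x) by (apply Ha2; auto).
    apply Hc0. rewrite <- He1. eapply (run_inj Hwo H_inj Hg (Some e)); eauto. }
  assert (Hlen : length (None :: map (g None) k) <= length (map (g lam) k)).
  { apply NoDup_incl_length.
    - constructor.
      + intro Hin. apply in_map_iff in Hin. destruct Hin as [d [Hd _]]. exact (Hleg d Hd).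
      + apply NoDup_map_NoDup_ForallPairs; auto.
        intros d1 d2 _ _ E. destruct (g None d1) as [x|] eqn:E1; [|exfalso; exact (Hleg d1 E1)].
        eapply (run_inj Hwo H_inj Hg None); eauto.
    - intros y [<-|Hy].
      + rewrite <- Hnac. apply in_map; auto.
      + apply in_map_iff in Hy. destruct Hy as [d [<- Hd]].
        destruct (g None d) as [x|] eqn:E1; [|exfalso; exact (Hleg d E1)].
        destruct (run_mono k Hwo Hcl Hg None lam) with (d := d) (x := x) as [d' [Hd' Ed']]; auto.
        { destruct lam; simpl; auto. }
        rewrite <- Ed'. apply in_map; auto. }
  simpl in Hlen. rewrite !length_map in Hlen. lia.
Qed.

Lemma cneg_cneg {L} (u : coord L) : cneg (cneg u) = u.
Proof. destruct u; reflexivity. Qed.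

Lemma get_rotinv {L} i (p : point L) : get (rotinv i p) i = get p i.
Proof. destruct i; reflexivity. Qed.

Lemma rot_rotinv {L} i (p : point L) : rot i (rotinv i p) = p.
Proof. destruct i, p; simpl; rewrite ?cneg_cneg; reflexivity. Qed.

Lemma rotm_inv i m : rotm i (rotm i m) = m.
Proof. destruct i, m; reflexivity. Qed.

Lemma qt_qtinv {L} i (a : coord L) p : qt_pt i a (qtinv_pt i a p) = p.
Proof.
  unfold qtinv_pt. destruct (decide (get p i = a)) as [E|E]; unfold qt_pt.
  - rewrite get_rotinv. destruct (decide (get p i = a)); [apply rot_rotinv|contradiction].
  - destruct (decide (get p i = a)); [contradiction|reflexivity].
Qed.

Lemma dqt_dqtinv {L} i (a : coord L) pm : dqt_pt i a (dqtinv_pt i a pm) = pm.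
Proof.
  destruct pm as [p m]. unfold dqtinv_pt; simpl. destruct (decide (get p i = a)) as [E|E]; unfold dqt_pt; simpl.
  - rewrite get_rotinv. destruct (decide (get p i = a)); [|contradiction].
    rewrite rot_rotinv, rotm_inv; reflexivity.
  - destruct (decide (get p i = a)); [contradiction|reflexivity].
Qed.

Lemma esig_eq {L} (c c' : ecell L) : proj1_sig c = proj1_sig c' -> c = c'.
Proof.
  destruct c as [p h], c' as [p' h']; simpl; intros ->. f_equal. apply UIP_dec, bool_dec.
Qed.

Lemma dsig_eq {L} (c c' : dcell L) : proj1_sig c = proj1_sig c' -> c = c'.
Proof.
  destruct c as [p h], c' as [p' h']; simpl; intros ->. f_equal. apply UIP_dec, bool_dec.
Qed.

Definition Sl {L} (p : point L) : list (coord L) :=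
  px p :: cneg (px p) :: py p :: cneg (py p) :: pz p :: cneg (pz p) :: nil.

Lemma Sl_neg {L} (p : point L) u : In u (Sl p) -> In (cneg u) (Sl p).
Proof. unfold Sl; simpl; intros H; repeat destruct H as [<-|H]; rewrite ?cneg_cneg; simpl; tauto. Qed.

Definition allin {L} (S : list (coord L)) (q : point L) :=
  In (px q) S /\ In (py q) S /\ In (pz q) S.

Definition pts {L} (S : list (coord L)) : list (point L) :=
  flat_map (fun x => flat_map (fun y => map (fun z => Pt x y z) S) S) S.

Lemma pts_spec {L} (S : list (coord L)) q : In q (pts S) <-> allin S q.
Proof.
  unfold pts, allin. rewrite in_flat_map. split.
  - intros [x [Hx H]]. rewrite in_flat_map in H. destruct H as [y [Hy H]].
    rewrite in_map_iff in H. destruct H as [z [<- Hz]]. simpl; auto.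
  - destruct q as [x y z]; simpl; intros [Hx [Hy Hz]]. exists x; split; auto.
    rewrite in_flat_map. exists y; split; auto. apply in_map; auto.
Qed.

Lemma allin_rotinv {L} (S : list (coord L)) i q :
  (forall u, In u S -> In (cneg u) S) -> allin S q -> allin S (rotinv i q).
Proof. intros Hn [H1 [H2 H3]]; destruct i, q; unfold allin in *; simpl in *; auto. Qed.

Lemma conv_list {C P} (proj : C -> P) : (forall x y, proj x = proj y -> x = y) ->
  forall kp : list P, exists kc, forall d, In d kc <-> In (proj d) kp.
Proof.
  intros Hinj kp; induction kp as [|p kp [kc Hkc]].
  - exists nil; simpl; tauto.
  - destruct (classic (exists d, proj d = p)) as [[d0 Hd0]|Hn].
    + exists (d0 :: kc). intro d; simpl; rewrite Hkc. split.
      * intros [<-|H]; auto.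
      * intros [H|H]; auto. left. apply Hinj. congruence.
    + exists kc. intro d; simpl; rewrite Hkc. split; auto. intros [H|H]; auto.
      exfalso; apply Hn; eauto.
Qed.

Lemma iter_qtinv {L} i (a : coord L) n : forall p, get p i = a ->
  Nat.iter n (qtinv_pt i a) p = Nat.iter n (rotinv i) p.
Proof.
  induction n as [|n IH]; intros p Hp; [reflexivity|].
  rewrite !Nat.iter_succ_r.
  assert (qtinv_pt i a p = rotinv i p) as ->.
  { unfold qtinv_pt. destruct (decide _); [reflexivity|contradiction]. }
  apply IH. rewrite get_rotinv; auto.
Qed.

Lemma iter_dqtinv {L} i (a : coord L) n : forall pm, get (fst pm) i = a ->
  fst (Nat.iter n (dqtinv_pt i a) pm) = Nat.iter n (rotinv i) (fst pm).
Proof.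
  induction n as [|n IH]; intros pm Hp; [reflexivity|].
  rewrite !Nat.iter_succ_r.
  assert (dqtinv_pt i a pm = (rotinv i (fst pm), rotm i (snd pm))) as ->.
  { unfold dqtinv_pt. destruct (decide _); [reflexivity|contradiction]. }
  rewrite IH; auto. simpl. rewrite get_rotinv; auto.
Qed.

Lemma proj_iter_e {L} i (a : coord L) n c :
  proj1_sig (Nat.iter n (eqtinv i a) c) = Nat.iter n (qtinv_pt i a) (proj1_sig c).
Proof. induction n; simpl; [reflexivity|]. rewrite IHn; reflexivity. Qed.

Lemma proj_iter_d {L} i (a : coord L) n c :
  proj1_sig (Nat.iter n (dqtinv i a) c) = Nat.iter n (dqtinv_pt i a) (proj1_sig c).
Proof. induction n; simpl; [reflexivity|]. rewrite IHn; reflexivity. Qed.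

Definition p0 {L} (r0 : L) (i : axis) (a : coord L) : point L :=
  match i with
  | AX => if is_inf a then Pt a (CPos r0) CZero else Pt a CPInf CZero
  | AY => if is_inf a then Pt (CPos r0) a CZero else Pt CPInf a CZero
  | AZ => if is_inf a then Pt (CPos r0) CZero a else Pt CPInf CZero a
  end.

Definition m0 {L} (i : axis) (a : coord L) : axis :=
  match i with
  | AX => if is_inf a then AX else AY
  | AY => if is_inf a then AY else AX
  | AZ => if is_inf a then AZ else AX
  end.

Lemma p0_get {L} (r0 : L) i a : get (p0 r0 i a) i = a.
Proof. destruct i, a; reflexivity. Qed.

Lemma p0_moves {L} (r0 : L) i a (k : pw) :
  Nat.iter (pw_nat k) (rotinv i) (p0 r0 i a) <> p0 r0 i a.
Proof. destruct i, a, k; simpl; discriminate. Qed.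

Lemma p0_cell {L} (r0 : L) i a : is_cell (p0 r0 i a) = true.
Proof. destruct i, a; reflexivity. Qed.

Lemma p0_dcell {L} (r0 : L) i a : is_inf (get (fst (p0 r0 i a, m0 i a)) (snd (p0 r0 i a, m0 i a))) = true.
Proof. destruct i, a; reflexivity. Qed.

Lemma e_main {L} (HL : infinite_type L) (I : Type) (lt : I -> I -> Prop) : well_order lt ->
  forall sigma : I -> basic L,
    universally_convergent (@eqtinv L) lt sigma <-> twist_finite sigma.
Proof.
  intros Hwo sigma.
  assert (Hinj : forall i a (x y : ecell L), eqtinv i a x = eqtinv i a y -> x = y).
  { intros i a x y E. apply esig_eq. apply (f_equal (@proj1_sig _ _)) in E. simpl in E.
    rewrite <- (qt_qtinv i a (proj1_sig x)), <- (qt_qtinv i a (proj1_sig y)), E. reflexivity. }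
  assert (Hcls : forall c : ecell L, exists k, In c k /\ forall d i a, In d k -> In (eqtinv i a d) k).
  { intro c. destruct (conv_list (@proj1_sig _ _) esig_eq (pts (Sl (proj1_sig c)))) as [kc Hkc].
    exists kc. split.
    - apply Hkc, pts_spec. destruct c as [[x y z] h]; unfold allin, Sl; simpl; tauto.
    - intros d i a Hd. apply Hkc, pts_spec. apply Hkc, pts_spec in Hd. simpl.
      unfold qtinv_pt. destruct (decide _); auto. apply allin_rotinv; auto. apply Sl_neg. }
  split.
  - apply (uc_tf (@eqtinv L) Hinj Hcls); auto.
    intros [i a k]. destruct (HL nil) as [r0 _].
    exists (exist _ (p0 r0 i a) (p0_cell r0 i a)). intro E.
    apply (f_equal (@proj1_sig _ _)) in E. unfold tau in E; simpl in E.
    rewrite proj_iter_e in E. simpl in E. rewrite iter_qtinv in E by apply p0_get.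
    exact (p0_moves r0 i a k E).
  - apply (tf_uc (@eqtinv L) (fun d i => get (proj1_sig d) i) Hcls); auto.
    intros i a d Hd. apply NNPP. intro Hn. apply Hd. apply esig_eq. simpl.
    unfold qtinv_pt. destruct (decide _); [congruence|reflexivity].
Qed.

Lemma d_main {L} (HL : infinite_type L) (I : Type) (lt : I -> I -> Prop) : well_order lt ->
  forall sigma : I -> basic L,
    universally_convergent (@dqtinv L) lt sigma <-> twist_finite sigma.
Proof.
  intros Hwo sigma.
  assert (Hinj : forall i a (x y : dcell L), dqtinv i a x = dqtinv i a y -> x = y).
  { intros i a x y E. apply dsig_eq. apply (f_equal (@proj1_sig _ _)) in E. simpl in E.
    rewrite <- (dqt_dqtinv i a (proj1_sig x)), <- (dqt_dqtinv i a (proj1_sig y)), E. reflexivity. }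
  assert (Hcls : forall c : dcell L, exists k, In c k /\ forall d i a, In d k -> In (dqtinv i a d) k).
  { intro c.
    set (kp := flat_map (fun p => map (fun m => (p, m)) (AX :: AY :: AZ :: nil)) (pts (Sl (fst (proj1_sig c))))).
    assert (Hkp : forall pm, In pm kp <-> allin (Sl (fst (proj1_sig c))) (fst pm)).
    { intros [p m]. unfold kp. rewrite in_flat_map. split.
      - intros [p' [Hp' H]]. apply in_map_iff in H. destruct H as [m' [E _]].
        injection E as -> ->. apply pts_spec; auto.
      - intro H. exists p; split; [apply pts_spec; auto|]. apply in_map. destruct m; simpl; auto. }
    destruct (conv_list (@proj1_sig _ _) dsig_eq kp) as [kc Hkc].
    exists kc. split.
    - apply Hkc, Hkp. destruct c as [[[x y z] m] h]; unfold allin, Sl; simpl; tauto.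
    - intros d i a Hd. apply Hkc, Hkp. apply Hkc, Hkp in Hd. simpl.
      unfold dqtinv_pt. destruct (decide _); auto. apply allin_rotinv; auto. apply Sl_neg. }
  split.
  - apply (uc_tf (@dqtinv L) Hinj Hcls); auto.
    intros [i a k]. destruct (HL nil) as [r0 _].
    exists (exist _ (p0 r0 i a, m0 i a) (p0_dcell r0 i a)). intro E.
    apply (f_equal (fun c => fst (proj1_sig c))) in E. unfold tau in E; simpl in E.
    rewrite proj_iter_d in E. simpl in E. rewrite iter_dqtinv in E by apply p0_get.
    exact (p0_moves r0 i a k E).
  - apply (tf_uc (@dqtinv L) (fun d i => get (fst (proj1_sig d)) i) Hcls); auto.
    intros i a d Hd. apply NNPP. intro Hn. apply Hd. apply dsig_eq. simpl.
    unfold dqtinv_pt. destruct (decide _); [congruence|reflexivity].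
Qed.

Theorem lemma3p3 (L : Type) (HL : infinite_type L) :
  (forall (I : Type) (lt : I -> I -> Prop), well_order lt ->
     forall sigma : I -> basic L,
       universally_convergent (@eqtinv L) lt sigma <-> twist_finite sigma) /\
  (forall (I : Type) (lt : I -> I -> Prop), well_order lt ->
     forall sigma : I -> basic L,
       universally_convergent (@dqtinv L) lt sigma <-> twist_finite sigma).
Proof.
  split; intros I lt Hwo sigma; [apply e_main | apply d_main]; auto.
Qed.
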